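(* For every countably infinite algebraically closed group $K$, the isomorphism class $\{G\in\mathcal G:\ \overline G\cong K\}$ is dense in $\mathcal G$.
   Context: Let $\mathbb N=\{1,2,3,\dots\}$. Equip $\mathbb N^{\mathbb N\times\mathbb N}$ with the product topology of the discrete topology on $\mathbb N$. Let $\mathcal G$ be the subspace consisting of those $A\in\mathbb N^{\mathbb N\times\mathbb N}$ that are the multiplication table of a group on the underlying set $\mathbb N$ whose identity element is $1$. For $G\in\mathcal G$, $\overline G$ denotes the group on $\mathbb N$ with multiplication table $G$. A group $K$ is algebraically closed if every finite system of equations and inequations (words in variables $x_1,x_2,\dots$ with constants from $K$, i.e. elements of the free product of the free group on the variables with $K$) that has a solution in some group containing $K$ already has a solution in $K$. *)

(* Defs.v *)
From Stdlib Require List.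
From mathcomp Require Import all_boot.
Set Implicit Arguments.
Unset Strict Implicit.
Unset Printing Implicit Defensive.

Record group_axioms (T : Type) (mul : T -> T -> T) (inv : T -> T) (one : T)
  : Prop := GroupAxioms {
  mulA : forall x y z, mul x (mul y z) = mul (mul x y) z;
  mul1g : forall x, mul one x = x;
  mulg1 : forall x, mul x one = x;
  mulVg : forall x, mul (inv x) x = one;
  mulgV : forall x, mul x (inv x) = one }.

(* Words in variables x_0, x_1, ... with constants from K: syntactic
   representatives of elements of the free product F(x_0, x_1, ...) * K. *)
Inductive word (K : Type) : Type :=
  | WVar of nat
  | WCst of K
  | WOne
  | WMul of word K & word K
  | WInv of word K.

Fixpoint weval (K L : Type) (mulL : L -> L -> L) (invL : L -> L) (oneL : L)
    (f : K -> L) (a : nat -> L) (w : word K) : L :=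
  match w with
  | WVar i => a i
  | WCst k => f k
  | WOne => oneL
  | WMul u v => mulL (weval mulL invL oneL f a u) (weval mulL invL oneL f a v)
  | WInv u => invL (weval mulL invL oneL f a u)
  end.

Definition solves (K L : Type) (mulL : L -> L -> L) (invL : L -> L) (oneL : L)
    (f : K -> L) (a : nat -> L) (eqs neqs : list (word K)) : Prop :=
  (forall w, List.In w eqs -> weval mulL invL oneL f a w = oneL) /\
  (forall w, List.In w neqs -> weval mulL invL oneL f a w <> oneL).

Definition algebraically_closed (K : Type) (mul : K -> K -> K) (inv : K -> K)
    (one : K) : Prop :=
  forall eqs neqs : list (word K),
    (exists (L : Type) (mulL : L -> L -> L) (invL : L -> L) (oneL : L)
            (f : K -> L),
        group_axioms mulL invL oneL /\ injective f /\
        (forall x y, f (mul x y) = mulL (f x) (f y)) /\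
        exists a : nat -> L, solves mulL invL oneL f a eqs neqs) ->
    exists a : nat -> K, solves mul inv one id a eqs neqs.

Definition countably_infinite (K : Type) : Prop :=
  exists e : nat -> K, bijective e.

Definition posnat := {n : nat | 0 < n}.
Definition pone : posnat := exist _ 1 isT.

Definition table := posnat -> posnat -> posnat.

Definition in_calG (A : table) : Prop :=
  exists inv : posnat -> posnat, group_axioms A inv pone.

Definition table_iso (A : table) (K : Type) (mul : K -> K -> K) : Prop :=
  exists phi : posnat -> K, bijective phi /\
    forall x y, phi (A x y) = mul (phi x) (phi y).

(* S is dense in the subspace G of N^(N x N) with the product of discrete
   topologies: every nonempty basic open set of G (i.e. the set of tables in
   G agreeing with some A0 in G on a finite set of positions) meets S. *)
Definition dense_in_calG (S : table -> Prop) : Prop :=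
  forall A0 : table, in_calG A0 ->
  forall pos : list (posnat * posnat),
  exists A : table, in_calG A /\ S A /\
    forall p, List.In p pos -> A p.1 p.2 = A0 p.1 p.2.

(* Main.v *)
Require Import Defs.
From mathcomp Require Import all_boot.

Lemma grp_eq (T : Type) (mul : T -> T -> T) inv one :
  group_axioms mul inv one -> forall x y, mul x (inv y) = one -> x = y.
Proof.
case=> mA m1 mg1 mV mgV x y H.
by rewrite -[x]mg1 -(mV y) mA H m1.
Qed.

Arguments grp_eq {T mul inv one}.

Lemma In_mem (T : eqType) (x : T) (s : seq T) : List.In x s -> x \in s.
Proof.
elim: s => //= y s IH [->|/IH]; rewrite inE ?eqxx // => ->; by rewrite orbT.
Qed.

Lemma mem_In (T : eqType) (x : T) (s : seq T) : x \in s -> List.In x s.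
Proof.
elim: s => //= y s IH; rewrite inE => /orP [/eqP ->|/IH]; by [left|right].
Qed.

Lemma swap_ext (T : eqType) (K : Type) (eqK : K -> K -> bool)
  (eqKP : forall x y, reflect (x = y) (eqK x y)) (s : seq T) :
  uniq s -> forall (psi b : T -> K), bijective psi ->
  (forall i j, i \in s -> j \in s -> b i = b j -> i = j) ->
  exists phi : T -> K, bijective phi /\ (forall i, i \in s -> phi i = b i).
Proof.
elim: s => [|i s IH] /=.
  by move=> _ psi b bpsi _; exists psi.
move=> /andP [nis us] psi b bpsi injb.
have [phi [bphi ephi]] : exists phi : T -> K,
    bijective phi /\ (forall i, i \in s -> phi i = b i).
  apply: (IH us psi b bpsi) => j k js ks; apply: injb; by rewrite inE ?js ?ks orbT.
pose sw := fun x => if eqK x (phi i) then b i else if eqK x (b i) then phi i else x.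
have swK : cancel sw sw.
  move=> x; rewrite /sw.
  case: (eqKP x (phi i)) => [e1|h1].
    subst x; case: (eqKP (b i) (phi i)) => [//|_].
    by case: (eqKP (b i) (b i)).
  case: (eqKP x (b i)) => [e2|h2].
    subst x; by case: (eqKP (phi i) (phi i)).
  case: (eqKP x (phi i)) => [//|_].
  by case: (eqKP x (b i)).
exists (sw \o phi); split.
  by apply: bij_comp => //; exists sw.
move=> j; rewrite inE => /orP [/eqP ->|js] /=.
  by rewrite /sw; case: (eqKP _ _).
rewrite ephi // /sw.
case: (eqKP _ _) => [h|_].
  have : phi j = phi i by rewrite ephi.
  move/(bij_inj bphi) => eji; by move: nis; rewrite -eji js.
case: (eqKP _ _) => // h.
have eji : j = i by apply: injb; rewrite ?inE ?js ?eqxx ?orbT.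
by move: nis; rewrite -eji js.
Qed.

Theorem theorem6p5 (K : Type) (mul : K -> K -> K) (inv : K -> K) (one : K) :
  group_axioms mul inv one ->
  countably_infinite K ->
  algebraically_closed mul inv one ->
  dense_in_calG (fun G : table => in_calG G /\ table_iso G mul).
Proof.
move=> gK [e be] acK A0 [invA gA] pos.
have [g ge eg] := be.
pose eqK := fun x y : K => g x == g y.
have eqKP : forall x y, reflect (x = y) (eqK x y).
  move=> x y; apply: (iffP eqP) => [|->//]; exact: (can_inj eg).
pose F := undup (pone :: flatten [seq [:: p.1; p.2; A0 p.1 p.2] | p <- pos]).
pose eqs := WVar K 1 :: map (fun p : posnat * posnat =>
   WMul (WMul (WVar K (val p.1)) (WVar K (val p.2))) (WInv (WVar K (val (A0 p.1 p.2))))) pos.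
pose neqs := List.flat_map (fun i : posnat => List.flat_map (fun j : posnat =>
   if i == j then [::] else [:: WMul (WVar K (val i)) (WInv (WVar K (val j)))]) F) F.
have [a [Heq Hneq]] : exists a : nat -> K, solves mul inv one id a eqs neqs.
  apply: acK.
  exists (K * posnat)%type, (fun u v => (mul u.1 v.1, A0 u.2 v.2)),
    (fun u => (inv u.1, invA u.2)), (one, pone), (fun k => (k, pone)).
  split.
    constructor.
    - by move=> [? ?] [? ?] [? ?] /=; rewrite (Defs.mulA gK) (Defs.mulA gA).
    - by move=> [? ?] /=; rewrite (Defs.mul1g gK) (Defs.mul1g gA).
    - by move=> [? ?] /=; rewrite (Defs.mulg1 gK) (Defs.mulg1 gA).
    - by move=> [? ?] /=; rewrite (Defs.mulVg gK) (Defs.mulVg gA).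
    - by move=> [? ?] /=; rewrite (Defs.mulgV gK) (Defs.mulgV gA).
  split; first by move=> x y [].
  split; first by move=> x y /=; rewrite (Defs.mul1g gA).
  exists (fun n => (one, insubd pone n)); split.
    move=> w /= [<-|].
      by rewrite /=; congr pair; apply: val_inj; rewrite val_insubd.
    move/List.in_map_iff => [p [<- _]] /=.
    by rewrite !valKd (Defs.mul1g gK) (Defs.mulgV gK) (Defs.mulgV gA).
  move=> w /List.in_flat_map [i [iF /List.in_flat_map [j [jF]]]].
  case: (i =P j) => [//|nij] /= [<-|//] /=.
  rewrite !valKd => [[_ /(grp_eq gA)]]; exact: nij.
pose b := fun p : posnat => a (val p).
have injb : forall i j, i \in F -> j \in F -> b i = b j -> i = j.
  move=> i j iF jF bij; apply/eqP/negPn/negP => nij.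
  have : List.In (WMul (WVar K (val i)) (WInv (WVar K (val j)))) neqs.
    apply/List.in_flat_map; exists i; split; first exact: mem_In.
    apply/List.in_flat_map; exists j; split; first exact: mem_In.
    by rewrite (negbTE nij); left.
  move/Hneq => /=; rewrite -/(b i) -/(b j) bij (Defs.mulgV gK); by [].
pose psi := fun p : posnat => e (val p).-1.
have bpsi : bijective psi.
  exists (fun k => insubd pone (g k).+1).
    move=> p; apply: val_inj; rewrite /psi ge val_insubd /=.
    exact: prednK (valP p).
  by move=> k; rewrite /psi val_insubd /= eg.
have [phi [bphi ephi]] := @swap_ext _ K eqK eqKP F (undup_uniq _) psi b bpsi injb.
have [phinv phiK phinvK] := bphi.
have F1 : pone \in F by rewrite mem_undup inE eqxx.
have phi1 : phi pone = one.
  rewrite ephi //; apply: (Heq (WVar K 1)); by left.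
pose G := fun x y => phinv (mul (phi x) (phi y)).
have inG : in_calG G.
  exists (fun x => phinv (inv (phi x))); constructor => *; rewrite /G ?phinvK.
  + by rewrite (Defs.mulA gK).
  + by rewrite phi1 (Defs.mul1g gK) phiK.
  + by rewrite phi1 (Defs.mulg1 gK) phiK.
  + by rewrite (Defs.mulVg gK) -phi1 phiK.
  + by rewrite (Defs.mulgV gK) -phi1 phiK.
exists G; split => //; split.
  split => //; by exists phi; split => // x y; rewrite /G phinvK.
move=> p /[dup] pin /In_mem pin'.
have inF : forall x, x \in [:: p.1; p.2; A0 p.1 p.2] -> x \in F.
  move=> x xin; rewrite mem_undup inE; apply/orP; right.
  apply/flattenP; exists [:: p.1; p.2; A0 p.1 p.2] => //.
  by apply/mapP; exists p.
have h := Heq _ (or_intror (List.in_map _ _ _ pin)).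
move: h => /= /(grp_eq gK) h.
rewrite /G !ephi ?inF ?inE ?eqxx ?orbT //.
have e3 : phi (A0 p.1 p.2) = b (A0 p.1 p.2) by rewrite ephi ?inF ?inE ?eqxx ?orbT.
by rewrite /b h -/(b _) -e3 phiK.
Qed.
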